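(* Let $\mathcal{X}$ be a compact set equipped with a probability measure $\mu$ (e.g. the uniform distribution). Let $\pi:\mathcal{X}\to(0,1)$ be measurable with $m:=\inf_{x}\pi(x)>0$, and set $L_\pi:=1/m$. Let $\hat\pi:\mathcal{X}\to\mathbb{R}$ and $\sigma:\mathcal{X}\to[0,\infty)$ be measurable and $\beta\ge0$ such that $|\pi(x)-\hat\pi(x)|\le\beta\sigma(x)$ for all $x\in\mathcal{X}$. Define $u(x):=\min\{1,\max\{0,\hat\pi(x)+\beta\sigma(x)\}\}$, the densities (w.r.t. $\mu$) $\hat p(x):=u(x)/\int u\,d\mu$ and $\ell(x):=\pi(x)/\int\pi\,d\mu$. Then $$\mathrm{KL}(\hat p\,\|\,\ell)\le 2L_\pi\,\beta\,\mathbb{E}_{x\sim\hat p}[\sigma(x)].$$ In particular, in the batch BORE++ setting, with $\hat\pi=\hat\pi_{t-1}$, $\sigma=\sigma_{t-1}$, $\beta=\beta_{t-1}(\delta)$ on the high-probability event of the confidence bound, the target batch-sampling distribution $\hat p_t\propto\pi_{t-1,\delta}$ satisfies $\mathrm{KL}(\hat p_t\|\ell)\le 2L_\pi\beta_{t-1}(\delta)\mathbb{E}_{\hat p_t}[\sigma_{t-1}]$, where $\ell(x)=p(x\mid y\le\tau)$.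
   Context: $\mathrm{KL}(p\|q):=\mathbb{E}_{x\sim p}[\log p(x)-\log q(x)]$. Note $u\ge\pi>0$ under the hypothesis, so $\hat p$ is well defined. In the batch BORE++ setting, $\pi(x)=\Phi_\epsilon(\tau-f(x))=p(y\le\tau\mid x)$ and $\pi_{t,\delta}:=\min\{1,\max\{0,\hat\pi_t+\beta_t(\delta)\sigma_t\}\}$ with $\hat\pi_t,\sigma_t,\beta_t$ the kernel least-squares estimator, posterior standard deviation and confidence width computed from all observations collected so far. *)

(* Defs.v *)
From HB Require Import structures.
From mathcomp Require Import all_boot all_order all_algebra.
From mathcomp Require Import all_classical all_reals all_analysis.
Set Implicit Arguments. Unset Strict Implicit. Unset Printing Implicit Defensive.
Import Order.TTheory GRing.Theory Num.Theory.
Local Open Scope classical_set_scope.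
Local Open Scope ring_scope.

Section Defs.
Context (d : measure_display) (T : measurableType d) (R : realType).

Definition ucb (pihat sigma : T -> R) (beta : R) (x : T) : R :=
  Num.min 1 (Num.max 0 (pihat x + beta * sigma x)).

Definition normalize (mu : {measure set T -> \bar R}) (f : T -> R) (x : T) : R :=
  f x / (\int[mu]_(y in setT) f y)%R.

Definition KLdiv (mu : {measure set T -> \bar R}) (p q : T -> R) : \bar R :=
  (\int[mu]_x (if p x == 0 then 0 else p x * (ln (p x) - ln (q x)))%:E)%E.

Definition expect_dens (mu : {measure set T -> \bar R}) (p f : T -> R) : \bar R :=
  (\int[mu]_x (p x * f x)%:E)%E.

End Defs.

(* Main.v *)
Require Import Defs.
From HB Require Import structures.
From mathcomp Require Import all_boot all_order all_algebra.
From mathcomp Require Import all_classical all_reals all_analysis.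
From mathcomp Require Import lra ring.
Import Order.TTheory GRing.Theory Num.Theory.
Local Open Scope classical_set_scope.
Local Open Scope ring_scope.

Lemma int_bounds (d : measure_display) (T : measurableType d) (R : realType)
  (mu : probability T R) (h : T -> R) (m : R) :
  measurable_fun setT h -> 0 <= m -> (forall x, m <= h x <= 1) ->
  (m%:E <= \int[mu]_(x in setT) (h x)%:E <= 1%:E)%E.
Proof.
move=> mh m0 hb.
have mhE := (measurable_realfun.measurable_EFinP setT h).2 mh.
apply/andP; split.
- have -> : (m%:E = \int[mu]_(x in setT) (cst m%:E) x)%E.
    by rewrite integral_cst// -[LHS]mule1; congr (_ * _)%E; apply/esym; exact: probability_setT.
  apply: ge0_le_integral => //=.
  by move=> x _; rewrite lee_fin; case/andP: (hb x).
- have -> : (1%:E = \int[mu]_(x in setT) (cst 1%:E) x :> \bar R)%E.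
    by rewrite integral_cst// -[LHS]mule1; congr (_ * _)%E; apply/esym; exact: probability_setT.
  apply: ge0_le_integral => //=.
  + by move=> x _; rewrite lee_fin; case/andP: (hb x) => /(le_trans m0).
  + by move=> x _; rewrite lee_fin; case/andP: (hb x).
Qed.

Lemma fine_bounds (R : realType) (x : \bar R) (m : R) :
  (m%:E <= x <= 1%:E)%E -> x \is a fin_num /\ m <= fine x <= 1.
Proof.
case/andP=> h1 h2.
have xf : x \is a fin_num.
  by rewrite fin_numElt (lt_le_trans (ltNyr m)) ?(le_lt_trans h2 (ltry 1)).
by split => //; move: h1 h2; rewrite -(fineK xf) !lee_fin => -> ->.
Qed.

Theorem mainTheorem5 (d : measure_display) (T : measurableType d) (R : realType)
  (mu : probability T R) (pi pihat sigma : T -> R) (beta : R) :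
  measurable_fun setT pi ->
  (forall x, 0 < pi x < 1) ->
  0 < inf (range pi) ->
  measurable_fun setT pihat ->
  measurable_fun setT sigma ->
  (forall x, 0 <= sigma x) ->
  0 <= beta ->
  (forall x, `|pi x - pihat x| <= beta * sigma x) ->
  (KLdiv mu (normalize mu (ucb pihat sigma beta)) (normalize mu pi)
   <= (2 * (inf (range pi))^-1 * beta)%:E
      * expect_dens mu (normalize mu (ucb pihat sigma beta)) sigma)%E.
Proof.
move=> mpi pi01 m0 mpih msig sig0 beta0 hab.
set m := inf (range pi).
set u := ucb pihat sigma beta.
have mle : forall x, m <= pi x.
  move=> x; apply: ge_inf; last by exists x.
  by exists 0 => _ [y _ <-]; case/andP: (pi01 y) => /ltW.
have upi : forall x, pi x <= u x.
  move=> x; rewrite /u /ucb; case/andP: (pi01 x) => p0 p1.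
  have := hab x; rewrite ler_norml => /andP[_ h2].
  rewrite le_min (ltW p1) /= le_max; apply/orP; right; lra.
have u1 : forall x, u x <= 1 by move=> x; rewrite /u /ucb ge_min lexx.
have u2 : forall x, u x - pi x <= 2 * beta * sigma x.
  move=> x; rewrite /u /ucb; case/andP: (pi01 x) => p0 p1.
  have := hab x; rewrite ler_norml => /andP[h1 h2].
  have hm : Num.max 0 (pihat x + beta * sigma x) = pihat x + beta * sigma x.
    by apply/max_idPr; lra.
  rewrite hm; have : Num.min 1 (pihat x + beta * sigma x) <= pihat x + beta * sigma x.
    by rewrite ge_min lexx orbT.
  lra.
have mu_ : measurable_fun setT u.
  apply: measurable_realfun.measurable_minr; first exact: measurable_cst.
  apply: measurable_realfun.measurable_maxr; first exact: measurable_cst.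
  apply: measurable_realfun.measurable_funD => //; exact: measurable_realfun.measurable_funM.
have hpi : (m%:E <= \int[mu]_(x in setT) (pi x)%:E <= 1%:E)%E.
  apply: int_bounds => // [|x]; first exact: ltW.
  by rewrite mle /=; case/andP: (pi01 x) => _ /ltW.
have hu : (m%:E <= \int[mu]_(x in setT) (u x)%:E <= 1%:E)%E.
  apply: int_bounds => // [|x]; first exact: ltW.
  by rewrite u1 andbT (le_trans (mle x) (upi x)).
have hBA : (\int[mu]_(x in setT) (pi x)%:E <= \int[mu]_(x in setT) (u x)%:E)%E.
  apply: ge0_le_integral => //=.
  - by move=> x _; rewrite lee_fin; case/andP: (pi01 x) => /ltW.
  - exact: (measurable_realfun.measurable_EFinP setT pi).2.
  - exact: (measurable_realfun.measurable_EFinP setT u).2.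
  - by move=> x _; rewrite lee_fin.
have [fA /andP[Am A1]] := fine_bounds _ _ _ hu.
have [fB /andP[Bm B1]] := fine_bounds _ _ _ hpi.
have BA : fine (\int[mu]_(x in setT) (pi x)%:E)%E <= fine (\int[mu]_(x in setT) (u x)%:E)%E.
  exact: fine_le.
rewrite /KLdiv /expect_dens /normalize -/u.
rewrite /Rintegral.
set A := fine (\int[mu]_(x in setT) (u x)%:E)%E in Am A1 BA *.
set B := fine (\int[mu]_(x in setT) (pi x)%:E)%E in Bm B1 BA *.
have A0 : 0 < A by apply: lt_le_trans Am.
have B0 : 0 < B by apply: lt_le_trans Bm.
have pi0 : forall x, 0 < pi x by move=> x; case/andP: (pi01 x).
have u0 : forall x, 0 < u x by move=> x; exact: lt_le_trans (pi0 x) (upi x).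
pose G x := u x / A * (ln (u x / A) - ln (pi x / B)).
rewrite (eq_integral (EFin \o G)); last first.
  move=> x _ /=; rewrite /G ifF //; apply/negbTE; rewrite gt_eqF //.
  by rewrite divr_gt0.
have mG : measurable_fun setT G.
  apply: measurable_realfun.measurable_funM.
    by apply: measurable_realfun.measurable_funM => //; exact: measurable_cst.
  apply: measurable_realfun.measurable_funB.
    apply: measurableT_comp => //.
    by apply: measurable_realfun.measurable_funM => //; exact: measurable_cst.
  apply: measurableT_comp => //.
  by apply: measurable_realfun.measurable_funM => //; exact: measurable_cst.
have mS : measurable_fun setT (fun x => u x / A * sigma x).
  apply: measurable_realfun.measurable_funM => //.
  by apply: measurable_realfun.measurable_funM => //; exact: measurable_cst.
set c := 2 / m * beta.
have c0 : 0 <= c by rewrite /c mulr_ge0 // divr_ge0 // ltW.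
have Gle : forall x, G x <= c * (u x / A * sigma x).
  move=> x; rewrite /G.
  have p0 : 0 < u x / A by rewrite divr_gt0.
  have l0 : 0 < pi x / B by rewrite divr_gt0.
  rewrite -ln_div ?posrE //.
  set q := u x / pi x.
  have e1 : u x / A / (pi x / B) = q * (B / A).
    by rewrite /q; field; rewrite ?gt_eqF ?andbT //.
  have r1 : B / A <= 1 by rewrite ler_pdivrMr // mul1r.
  have r0 : 0 < B / A by rewrite divr_gt0.
  have q0 : 0 < q by rewrite /q divr_gt0.
  have qpi : q * pi x = u x by rewrite /q divfK // gt_eqF.
  have hln : ln (u x / A / (pi x / B)) <= q * (B / A) - 1.
    rewrite e1; have := @le_ln1Dx R (q * (B / A) - 1).
    rewrite [1 + _]addrC subrK; apply.
    have : 0 < q * (B / A) by rewrite mulr_gt0.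
    lra.
  have t1 : 1 <= m^-1 * pi x by rewrite mulrC ler_pdivlMr // mul1r.
  set s := beta * sigma x.
  have s0 : 0 <= s by rewrite /s mulr_ge0.
  have hs : s <= s * (m^-1 * pi x) by nra.
  have hu2 : u x - pi x <= 2 * s by rewrite /s mulrA.
  have px := pi0 x.
  have hq : q - 1 <= 2 * m^-1 * s by nra.
  have hq2 : q * (B / A) - 1 <= c * sigma x.
    have -> : c * sigma x = 2 * m^-1 * s by rewrite /c /s; ring.
    nra.
  rewrite mulrCA; apply: ler_wpM2l; first exact: ltW.
  exact: le_trans hln hq2.
rewrite integralE.
have h0 : (0 <= \int[mu]_(x in setT) (EFin \o G)^\- x)%E.
  by apply: integral_ge0 => x _; exact: funeneg_ge0.
apply: (@le_trans _ _ (\int[mu]_(x in setT) (EFin \o G)^\+ x - 0)%E).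
  exact: leeB.
rewrite sube0.
have -> : (c%:E * \int[mu]_x (u x / A * sigma x)%:E)%E
    = (\int[mu]_x (c * (u x / A * sigma x))%:E)%E.
  rewrite [RHS](eq_integral (fun x => c%:E * (u x / A * sigma x)%:E)%E); last first.
    by move=> x _; rewrite EFinM.
  rewrite ge0_integralZl //=.
  - exact: (measurable_realfun.measurable_EFinP setT _).2.
  - by move=> x _; rewrite lee_fin mulr_ge0 // divr_ge0 // ltW.
apply: ge0_le_integral => //=.
- apply: measurable_realfun.measurable_funepos.
  exact: (measurable_realfun.measurable_EFinP setT _).2.
- apply: (measurable_realfun.measurable_EFinP setT (fun x => c * (u x / A * sigma x))).2.
  by apply: measurable_realfun.measurable_funM => //; exact: measurable_cst.
- move=> x _; rewrite funeposE /= ge_max !lee_fin Gle /=.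
  by rewrite mulr_ge0 // mulr_ge0 // divr_ge0 // ltW.
Qed.
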